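(* Let $L$ be a finite-dimensional Lie algebra over a field $F$, let $M$ be a maximal subalgebra of $L$ and let $B$ be an ideal of $L$ with $B\subseteq M$. Then $\eta(L/B:M/B)=\eta(L:M)$.
   Context: For a Lie algebra $L$ and a nonzero subalgebra $X$, the strict core $k_L(X)$ is the sum of all ideals of $L$ that are proper subalgebras of $X$ (it is $0$ if there are none). A subalgebra $C$ of $L$ is a completion of a maximal subalgebra $M$ if $C\not\subseteq M$ but every proper subalgebra of $C$ that is an ideal of $L$ is contained in $M$. An ideal completion is a completion that is an ideal of $L$. The ideal index $\eta(L:M)$ is $\dim(C/k_L(C))$ for any ideal completion $C$ of $M$ in $L$ (this is independent of the choice of $C$). *)

(* Defs.v *)
From HB Require Import structures.
From mathcomp Require Import all_boot all_algebra.
Set Implicit Arguments. Unset Strict Implicit. Unset Printing Implicit Defensive.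
Import GRing.Theory.
Local Open Scope ring_scope.

Definition is_lie (F : fieldType) (L : vectType F) (br : L -> L -> L) : Prop :=
  [/\ (forall (a : F) (x y z : L), br (a *: x + y) z = a *: br x z + br y z),
      (forall (a : F) (x y z : L), br z (a *: x + y) = a *: br z x + br z y),
      (forall x : L, br x x = 0) &
      (forall x y z : L, br x (br y z) + br y (br z x) + br z (br x y) = 0)].

Section LieDefs.
Variables (F : fieldType) (L : vectType F) (br : L -> L -> L).

Definition subalg (U : {vspace L}) : Prop :=
  forall x y, x \in U -> y \in U -> br x y \in U.

Definition ideal (U : {vspace L}) : Prop :=
  forall x y, x \in U -> br x y \in U.

Definition proper_sub (U X : {vspace L}) : Prop :=
  (U <= X)%VS /\ U != X.

Definition maximal_subalg (M : {vspace L}) : Prop :=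
  [/\ subalg M, M != fullv &
      forall U, subalg U -> (M <= U)%VS -> U = M \/ U = fullv].

(* K is the strict core k_L(X): the sum (least upper bound in the lattice of
   subspaces) of all ideals of L that are proper subalgebras of X
   (0 if there are none). *)
Definition is_strict_core (X K : {vspace L}) : Prop :=
  (forall I, ideal I -> subalg I -> proper_sub I X -> (I <= K)%VS) /\
  (forall W : {vspace L},
     (forall I, ideal I -> subalg I -> proper_sub I X -> (I <= W)%VS) ->
     (K <= W)%VS).

Definition completion (M C : {vspace L}) : Prop :=
  [/\ subalg C, ~~ (C <= M)%VS &
      forall I, subalg I -> proper_sub I C -> ideal I -> (I <= M)%VS].

Definition ideal_completion (M C : {vspace L}) : Prop :=
  completion M C /\ ideal C.

End LieDefs.

(* pi : L -> Q is a surjective Lie homomorphism with kernel B, i.e. Q is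
   (a copy of) the quotient Lie algebra L/B with canonical projection pi. *)
Definition is_quotient_map (F : fieldType) (L Q : vectType F)
  (brL : L -> L -> L) (brQ : Q -> Q -> Q) (B : {vspace L}) (pi : 'Hom(L, Q)) :
  Prop :=
  [/\ forall x y, pi (brL x y) = brQ (pi x) (pi y),
      limg pi = fullv & lker pi = B].

(* Main.v *)
Require Import Defs.
From mathcomp Require Import all_boot all_algebra.
From Stdlib Require Import Classical Lia.
From mathcomp Require Import zify.
Set Implicit Arguments. Unset Strict Implicit. Unset Printing Implicit Defensive.
Import GRing.Theory.
Local Open Scope ring_scope.

Section Gen.
Variables (F : fieldType) (L : vectType F) (br : L -> L -> L).
Hypothesis hL : is_lie br.

Lemma brDl x y z : br (x + y) z = br x z + br y z.
Proof. move: hL; rewrite /is_lie => -[H _ _ _].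
have := H 1 x y z. rewrite !scale1r. by []. Qed.
Lemma brDr x y z : br z (x + y) = br z x + br z y.
Proof. move: hL; rewrite /is_lie => -[_ H _ _].
have := H 1 x y z. rewrite !scale1r. by []. Qed.
Lemma brN x y : br y x = - br x y.
Proof.
move: hL; rewrite /is_lie => -[_ _ H _]; apply/eqP; rewrite -addr_eq0.
have := H (x + y); rewrite brDl !brDr !H add0r addr0 => h; by rewrite addrC h.
Qed.

Definition iscore (M N : {vspace L}) := [/\ ideal br N, (N <= M)%VS &
  forall I, ideal br I -> (I <= M)%VS -> (I <= N)%VS].

Lemma ideal_sub I : ideal br I -> subalg br I.
Proof. by move=> hI x y xI _; apply: hI. Qed.

Lemma ideal_cap I J : ideal br I -> ideal br J -> ideal br (I :&: J)%VS.
Proof. by move=> hI hJ x y; rewrite !memv_cap => /andP[a b]; rewrite hI ?hJ. Qed.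

Lemma ideal_add I J : ideal br I -> ideal br J -> ideal br (I + J)%VS.
Proof.
move=> hI hJ x y /memv_addP[u uI [v vJ ->]].
by rewrite brDl memv_add ?hI ?hJ.
Qed.

Lemma ideal_subalg_add I S : ideal br I -> subalg br S -> subalg br (I + S)%VS.
Proof.
move=> hI hS x y /memv_addP[u uI [v vS ->]] /memv_addP[u' uI' [v' vS' ->]].
rewrite brDl !brDr addrA; apply: memv_add; last exact: hS.
rewrite -brDr; apply: memvD; first exact: hI.
by rewrite brN memvN hI.
Qed.

Lemma coreA M N C K : iscore M N -> ideal_completion br M C ->
  is_strict_core br C K ->
  [/\ (K <= N)%VS, (K <= C)%VS & (C :&: N <= K)%VS].
Proof.
move=> [iN NM cN] [[sC nCM cC] iC] [k1 k2]; split.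
- apply: k2 => I iI sI pI; apply: cN => //; exact: cC.
- by apply: k2 => I _ _ [].
- apply: k1; [exact: ideal_cap | exact/ideal_sub/ideal_cap | split; first exact: capvSl].
  apply/negP => /eqP e; move: nCM; rewrite -e.
  by rewrite (subv_trans (capvSr _ _) NM).
Qed.

Lemma coreMin M N C K : iscore M N -> ideal_completion br M C ->
  is_strict_core br C K -> forall J, ideal br J -> (N <= J)%VS ->
  (J <= C + N)%VS -> (J <= N)%VS \/ (C + N <= J)%VS.
Proof.
move=> hN hC hK J iJ NJ JC.
have [KN KC CNK] := coreA hN hC hK.
case: hN => iN NM cN; case: hC => [[sC nCM cC] iC]; case: hK => k1 k2.
have [e|ne] := eqVneq (J :&: C)%VS C.
  right; rewrite subv_add NJ andbT -e; exact: capvSl.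
left; have JCK : (J :&: C <= K)%VS.
  apply: k1; [exact: ideal_cap | exact/ideal_sub/ideal_cap | by split; first exact: capvSr].
move/subvP: JC => JC; move/subvP: NJ => NJ; move/subvP: JCK => JCK; move/subvP: KN => KN.
apply/subvP => x xJ; have /memv_addP[c cCm [n nN ex]] := JC x xJ.
have ecx : c = x - n by rewrite ex addrK.
have cJ : c \in J by rewrite ecx memvB // NJ.
have : c \in (J :&: C)%VS by rewrite memv_cap cJ cCm.
move/JCK/KN => cN'.
by rewrite ex memvD.
Qed.

End Gen.

Section Cmp.
Variables (F : fieldType) (L : vectType F) (br : L -> L -> L).
Hypothesis hL : is_lie br.

Lemma helperH M N D E : maximal_subalg br M -> iscore br M N ->
  ideal br D -> ideal br E -> (N <= D)%VS -> (D :&: E <= N)%VS ->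
  ~~ (D <= M)%VS -> ~~ (E <= M)%VS ->
  (\dim D + \dim M = \dim (fullv : {vspace L}) + \dim N)%N.
Proof.
move=> [sM _ mM] [iN NM cN] iD iE ND DEN nDM nEM.
have full X : ideal br X -> ~~ (X <= M)%VS -> (X + M)%VS = fullv.
  move=> iX nXM; case: (mM (X + M)%VS (ideal_subalg_add hL iX sM) (addvSr _ _)) => // e.
  by move: nXM; rewrite -e addvSl.
have eDM : (D :&: M)%VS = N.
  apply: subv_anti; rewrite subv_cap ND NM !andbT.
  apply: cN; last exact: capvSr.
  move=> x y; rewrite memv_cap => /andP[xD xM].
  have : y \in (E + M)%VS by rewrite full ?memvf.
  case/memv_addP => e eE [m mM' ->]; rewrite brDr //.
  apply: memvD.
    have : br x e \in (D :&: E)%VS by rewrite memv_cap iD //= brN // memvN iE.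
    by move/(subvP DEN)/(subvP NM) => h; rewrite memv_cap iD.
  by rewrite memv_cap iD // sM.
by rewrite -dimv_sum_cap eDM full.
Qed.

Lemma cmpDim M N D1 D2 : maximal_subalg br M -> iscore br M N ->
  ideal br D1 -> ideal br D2 -> (N <= D1)%VS -> (N <= D2)%VS ->
  ~~ (D1 <= M)%VS -> ~~ (D2 <= M)%VS ->
  (forall J, ideal br J -> (N <= J)%VS -> (J <= D1)%VS -> (J <= N)%VS \/ (D1 <= J)%VS) ->
  (forall J, ideal br J -> (N <= J)%VS -> (J <= D2)%VS -> (J <= N)%VS \/ (D2 <= J)%VS) ->
  \dim D1 = \dim D2.
Proof.
move=> hM hN i1 i2 N1 N2 n1 n2 m1 m2.
have iJ := ideal_cap i1 i2.
have NJ : (N <= D1 :&: D2)%VS by rewrite subv_cap N1 N2.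
case: (m1 _ iJ NJ (capvSl _ _)) => [JN|h1].
  have JN' : (D2 :&: D1 <= N)%VS by rewrite capvC.
  have e1 := helperH hM hN i1 i2 N1 JN n1 n2.
  have e2 := helperH hM hN i2 i1 N2 JN' n2 n1.
  lia.
case: (m2 _ iJ NJ (capvSr _ _)) => [JN|h2].
  have JN' : (D2 :&: D1 <= N)%VS by rewrite capvC.
  have e1 := helperH hM hN i1 i2 N1 JN n1 n2.
  have e2 := helperH hM hN i2 i1 N2 JN' n2 n1.
  lia.
rewrite subv_cap in h1; rewrite subv_cap in h2.
case/andP: h1 => _ h1; case/andP: h2 => h2 _.
by rewrite (@subv_anti _ _ D1 D2) // h1 h2.
Qed.

End Cmp.

Section Core.
Variables (F : fieldType) (L : vectType F) (br : L -> L -> L).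
Hypothesis hL : is_lie br.

Lemma ideal0 : ideal br (0%VS : {vspace L}).
Proof.
move=> x y; rewrite memv0 => /eqP ->.
have h := brDl hL 0 0 y; rewrite addr0 in h.
rewrite memv0; apply/eqP.
by apply: (@addrI _ (br 0 y)); rewrite -h addr0.
Qed.

Lemma dim_lt (I J : {vspace L}) : ~~ (J <= I)%VS -> (\dim I < \dim (I + J))%N.
Proof.
move=> nJI; rewrite ltnNge; apply/negP => le; move/negP: nJI; apply.
have /eqP e : (I == I + J)%VS by rewrite eqEdim addvSl le.
rewrite e; exact: addvSr.
Qed.

Lemma exists_core M : exists N, iscore br M N.
Proof.
suff H : forall k I, ideal br I -> (I <= M)%VS -> (\dim M - \dim I <= k)%N ->
  exists N, iscore br M N.
  exact: (H (\dim M) 0%VS ideal0 (sub0v _) (leq_subr _ _)).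
elim=> [|k IH] I iI IM hk;
  (case: (classic (forall J, ideal br J -> (J <= M)%VS -> (J <= I)%VS)) => [hall|nall];
  first by exists I; split);
  (have [J hJ] := not_all_ex_not _ _ nall;
  have [iJ hJ2] := imply_to_and _ _ hJ;
  have [JM nJI] := imply_to_and _ _ hJ2;
  have iIJ := ideal_add hL iI iJ;
  have IJM : (I + J <= M)%VS by rewrite subv_add IM JM);
  (have lt : (\dim I < \dim (I + J))%N by apply: dim_lt; apply/negP);
  have := dimvS IJM.
  lia.
move=> le2; apply: (IH (I + J)%VS iIJ IJM); lia.
Qed.

End Core.

Unset Implicit Arguments.
Theorem corollary2p4 (F : fieldType) (L : vectType F) (br : L -> L -> L)
  (M B : {vspace L}) (Q : vectType F) (brQ : Q -> Q -> Q) (pi : 'Hom(L, Q)) :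
  is_lie br -> maximal_subalg br M -> ideal br B -> (B <= M)%VS ->
  is_lie brQ -> is_quotient_map br brQ B pi ->
  (* eta(L/B : M/B) = eta(L : M), for any choices of the ideal completions *)
  forall (C K : {vspace L}) (C' K' : {vspace Q}),
    ideal_completion br M C -> is_strict_core br C K ->
    ideal_completion brQ (pi @: M)%VS C' -> is_strict_core brQ C' K' ->
    (\dim C' - \dim K')%N = (\dim C - \dim K)%N.
Proof.
move=> hL hM iB BM hQ [hom surj kerB] C K C' K' hC hK hC' hK'.
have [N hN] := exists_core hL M.
have [iN NM cN] := hN.
have BN : (B <= N)%VS by apply: cN.
have srj q : exists x, q = pi x.
  have : q \in limg pi by rewrite surj memvf.
  by case/memv_imgP => x _ ->; exists x.
have kr x y : pi x = pi y -> x - y \in B.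
  by move=> e; rewrite -kerB memv_ker linearB /= e subrr.
have img I : ideal br I -> ideal brQ (pi @: I)%VS.
  move=> iI x y /memv_imgP [u uI ->]; have [v ->] := srj y.
  by rewrite -hom memv_img // iI.
have pre W : ideal brQ W -> ideal br (pi @^-1: W)%VS.
  by move=> iW x y; rewrite -!memv_preim hom => /iW.
have back (X : {vspace L}) x : (B <= X)%VS -> pi x \in (pi @: X)%VS -> x \in X.
  move=> BX /memv_imgP [u uX e]; have := kr _ _ e => /(subvP BX) h.
  by rewrite -(subrK u x) memvD.
have hNQ : iscore brQ (pi @: M)%VS (pi @: N)%VS.
  split; [exact: img | exact: limgS |].
  move=> I' iI' I'M.
  have sub : (pi @^-1: I' <= N)%VS.
    apply: cN; first exact: pre.
    apply/subvP => x; rewrite -memv_preim => /(subvP I'M) h.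
    exact: back (subv_trans BN NM) h.
  apply/subvP => q qI; have [x ex] := srj q; rewrite ex memv_img //.
  by apply: (subvP sub); rewrite -memv_preim -ex.
have [KN KC CNK] := coreA hN hC hK.
have [KN' KC' CNK'] := coreA hNQ hC' hK'.
have eA : (\dim (C + N) + \dim K = \dim C + \dim N)%N.
  rewrite -(dimv_sum_cap C N) (_ : (C :&: N)%VS = K) //.
  by apply: subv_anti; rewrite CNK subv_cap KN KC.
have eA' : (\dim (C' + pi @: N) + \dim K' = \dim C' + \dim (pi @: N))%N.
  rewrite -(dimv_sum_cap C' (pi @: N)) (_ : (C' :&: pi @: N)%VS = K') //.
  by apply: subv_anti; rewrite CNK' subv_cap KN' KC'.
have [[_ nCM _] iC] := hC.
have [[_ nCM' _] iC'] := hC'.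
set D2 := (pi @^-1: (C' + pi @: N))%VS.
have iD2 : ideal br D2 by apply: pre; apply: ideal_add => //; exact: img.
have ND2 : (N <= D2)%VS.
  apply/subvP => x xN; rewrite -memv_preim -[pi x]add0r; apply: memv_add; [exact: mem0v | exact: memv_img].
have nD2M : ~~ (D2 <= M)%VS.
  apply/negP => D2M; move/negP: nCM'; apply; apply/subvP => q qC.
  have [x ex] := srj q; rewrite ex memv_img //; apply: (subvP D2M).
  rewrite -memv_preim -ex -[q]addr0; apply: memv_add => //; exact: mem0v.
have eD : \dim (C + N) = \dim D2.
  apply: (cmpDim hL hM hN (ideal_add hL iC iN) iD2 (addvSr _ _) ND2) => //.
  - by apply/negP => h; move/negP: nCM; apply; exact: subv_trans (addvSl _ _) h.
  - exact: coreMin hN hC hK.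
  move=> J iJ NJ JD2.
  have := coreMin hNQ hC' hK' (img _ iJ) (limgS _ NJ).
  case.
  - apply/subvP => q /memv_imgP [x xJ ->]; rewrite memv_preim.
    exact: (subvP JD2).
  - move=> h; left; apply/subvP => x xJ; apply: back BN _.
    exact: (subvP h) (memv_img _ xJ).
  - move=> h; right; apply/subvP => x; rewrite -memv_preim => /(subvP h) hx.
    exact: back (subv_trans BN NJ) hx.
have eD2 : \dim D2 = (\dim B + \dim (C' + pi @: N))%N.
  rewrite -(limg_ker_dim pi D2) kerB.
  have -> : (D2 :&: B = B)%VS by apply/capv_idPr; exact: subv_trans BN ND2.
  rewrite (_ : (pi @: D2)%VS = (C' + pi @: N)%VS) //; apply: subv_anti; apply/andP; split; apply/subvP => q.
    by case/memv_imgP => x; rewrite -memv_preim => h ->.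
  by move=> hq; have [x ex] := srj q; rewrite ex memv_img // -memv_preim -ex.
have eN : \dim N = (\dim B + \dim (pi @: N))%N.
  rewrite -(limg_ker_dim pi N) kerB.
  by have -> : (N :&: B = B)%VS by apply/capv_idPr.
lia.
Qed.
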